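(* Let $p$ be a prime, $k$ a positive integer, and $n=p^k$. Then \[\operatorname{disc}(\mathcal A_n)\ge\frac14\,p^{\frac{k-\lfloor k/3\rfloor}{2}}.\]
   Context: An arithmetic progression in $\mathbb{Z}_n$ is a set $\{a+kd: 0\le k<l\}$ with $a,d\in\mathbb{Z}_n$ and $l$ an integer with $0\le l\le n/\gcd(n,d)$ (with $\gcd(0,n)=n$); $\mathcal A_n$ is the family of all of them. For $\chi:\mathbb{Z}_n\to\{1,-1\}$, $\chi(A)=\sum_{x\in A}\chi(x)$ and $\operatorname{disc}(\mathcal A_n)=\min_{\chi:\mathbb{Z}_n\to\{1,-1\}}\max_{A\in\mathcal A_n}|\chi(A)|$. *)

(* Defs.v *)
From mathcomp Require Import all_boot all_order all_algebra.
Set Implicit Arguments. Unset Strict Implicit. Unset Printing Implicit Defensive.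
Import GRing.Theory Num.Theory.

(* Z_n is modelled by 'I_n (residues 0..n-1), arithmetic done modulo n. *)

Definition ap (n : nat) (a d l : nat) : {set 'I_n} :=
  [set x : 'I_n | [exists i : 'I_n, (i < l) && (nat_of_ord x == (a + i * d) %% n)]].

(* Admissible length: 0 <= l <= n / gcd(n, d)  (gcdn 0 n = n). *)
Definition ap_ok (n : nat) (d : 'I_n) (l : 'I_n.+1) : bool := l <= n %/ gcdn n d.

Definition chi_sum (n : nat) (chi : {ffun 'I_n -> bool}) (A : {set 'I_n}) : int :=
  (\sum_(x in A) (if chi x then 1 else -1))%R.

Definition max_disc (n : nat) (chi : {ffun 'I_n -> bool}) : nat :=
  \max_(t : 'I_n * 'I_n * 'I_n.+1 | ap_ok t.1.2 t.2)
     `|chi_sum chi (ap n t.1.1 t.1.2 t.2)|%N.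

(* disc(A_n) = min over colourings; the neutral element n is harmless since
   every value max_disc is <= n. *)
Definition disc_AP (n : nat) : nat :=
  \big[minn/n]_(chi : {ffun 'I_n -> bool}) max_disc chi.

(* Main.v *)
Require Import Defs.
From Stdlib Require Import Reals.
From mathcomp Require Import all_boot.
Set Warnings "-notation-overridden,-ambiguous-paths".
From Stdlib Require Import Lra Psatz.
From mathcomp Require Import all_order all_algebra.
From mathcomp Require Import zify ring.
Import Order.TTheory GRing.Theory Num.Theory.
Set Implicit Arguments. Unset Strict Implicit. Unset Printing Implicit Defensive.
Local Open Scope ring_scope.

Lemma sum_block (F : nat -> int) c M :
  \sum_(i < c * M) F i = \sum_(s < c) \sum_(r < M) F (r + M * s)%N.
Proof.
elim: c => [|c IH]; first by rewrite mul0n !big_ord0.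
rewrite mulSnr big_split_ord big_ord_recr /= IH; congr (_ + _).
by apply: eq_bigr => r _; rewrite addnC mulnC.
Qed.

Lemma sum_block' (F : nat -> int) n c M : n = (c * M)%N ->
  \sum_(i < n) F i = \sum_(s < c) \sum_(r < M) F (r + M * s)%N.
Proof. move=> ->; exact: sum_block. Qed.

Lemma eqle (x y x' y' : int) : x = x' -> y' = y -> x' <= y' -> x <= y.
Proof. by move=> -> ->. Qed.

Lemma alg (S SP E hm h0 Qa Qb Qc W M G1 P cz Dz : int) :
 0 < W -> 0 < M -> 0 < G1 -> 0 < P -> 0 < cz -> cz < P ->
 M * P <= (P * G1) ^+ 2 ->
 S = (cz * cz) * SP + (cz * M) * (h0 + (cz - 1) * hm) ->
 (P * G1) * SP = M * E ->
 E = W * (Qa - Qb) ->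
 (P * G1 - G1) * hm = W * (Qb - Qc) ->
 S <= (M * P * G1) * (W * Dz ^+ 2) ->
 h0 = W * (M * P * G1) ->
 0 <= Qa -> Qb * (P * G1) <= (M * P * G1) * Dz ^+ 2 -> Qc * G1 <= (M * P * G1) * G1 ^+ 2 ->
 P * M * (cz * (P - cz)) <= Dz ^+ 2 * (P * (P - 1) + cz * (P - cz)).
Proof.
move=> W0 M0 G0 P0 c0 cP hMP e1 e2 e3 e4 i0 e6 q1 q2 q3.
set X := P * G1 * G1 * (P - 1).
have X0 : 0 <= X by rewrite /X; nia.
have key : S * X = W * (cz * cz * M * G1 * (P - 1) * (Qa - Qb)
   + cz * M * M * P * P * G1 * G1 * G1 * (P - 1) + cz * (cz - 1) * M * P * G1 * (Qb - Qc)).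
  have -> : S * X = cz * cz * (P * G1 * SP) * (G1 * (P - 1)) + cz * M * h0 * X
     + cz * M * (cz - 1) * P * G1 * ((P * G1 - G1) * hm) by rewrite e1 /X; ring.
  by rewrite e2 e4 e3 e6 /X; ring.
have i1 : S * X <= (M * P * G1) * (W * Dz ^+ 2) * X by apply: ler_wpM2r.
rewrite key in i1.
have i2 : cz * cz * M * G1 * (P - 1) * (Qa - Qb)
   + cz * M * M * P * P * G1 * G1 * G1 * (P - 1) + cz * (cz - 1) * M * P * G1 * (Qb - Qc)
   <= (M * P * G1) * Dz ^+ 2 * X.
  rewrite -(ler_pM2l W0); apply: (le_trans i1); apply: eqle (lexx _) => //; ring.
have MG0 : 0 < M * G1 by rewrite mulr_gt0.
have i3 : cz * cz * (P - 1) * (Qa - Qb) + cz * M * P * P * G1 * G1 * (P - 1)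
          + cz * (cz - 1) * P * (Qb - Qc) <= P * P * G1 * G1 * (P - 1) * Dz ^+ 2.
  rewrite -(ler_pM2l MG0); apply: eqle i2; rewrite /X; ring.
have PG0 : 0 < P * G1 by rewrite mulr_gt0.
have qb : Qb <= M * Dz ^+ 2.
  rewrite -(ler_pM2r PG0); apply: eqle q2; ring.
have qc : Qc <= M * P * G1 * G1.
  rewrite -(ler_pM2r G0); apply: eqle q3; ring.
have cpc : 0 <= cz * (P - cz) by nia.
have t1 : 0 <= cz * cz * (P - 1) * Qa by nia.
have t2 : cz * (P - cz) * Qb <= cz * (P - cz) * (M * Dz ^+ 2) by apply: ler_wpM2l.
have c1 : 0 <= cz * (cz - 1) * P by nia.
have t3 : cz * (cz - 1) * P * Qc <= cz * (cz - 1) * P * (M * P * G1 * G1) by apply: ler_wpM2l.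
have mp : M <= P * G1 * G1.
  rewrite -(ler_pM2r P0); apply: eqle hMP; ring.
have D0 : 0 <= Dz ^+ 2 by apply: sqr_ge0.
have t4 : cz * (P - cz) * Dz ^+ 2 * M <= cz * (P - cz) * Dz ^+ 2 * (P * G1 * G1).
  by apply: ler_wpM2l => //; apply: mulr_ge0.
have i4 : P * G1 * G1 * (cz * M * P * (P - cz)) <= P * G1 * G1 * (Dz ^+ 2 * (P * (P - 1) + cz * (P - cz))).
  have e : cz * cz * (P - 1) * (Qa - Qb) + cz * M * P * P * G1 * G1 * (P - 1)
          + cz * (cz - 1) * P * (Qb - Qc) =
       cz * cz * (P - 1) * Qa - cz * (P - cz) * Qb + cz * M * P * P * G1 * G1 * (P - 1)
          - cz * (cz - 1) * P * Qc by ring.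
  rewrite e in i3.
  lia.
have PGG : 0 < P * G1 * G1 by rewrite !mulr_gt0.
rewrite (ler_pM2l PGG) in i4.
apply: eqle i4; ring.
Qed.

Section Core.
Variable n' : nat.
Local Notation N := n'.+2.
Local Notation Z := 'I_n'.+2.
Variable chi : {ffun Z -> bool}.

Definition sg (x : Z) : int := if chi x then 1 else -1.
Lemma sg2 x : sg x * sg x = 1.
Proof. by rewrite /sg; case: (chi x); rewrite ?mulrNN mulr1. Qed.

Lemma sum_shift (F : Z -> int) (y : Z) : \sum_x F (x + y) = \sum_x F x.
Proof. by rewrite [RHS](reindex_inj (addIr y)). Qed.

Definition C (z : Z) : int := \sum_x sg x * sg (x + z).
Definition U : {set Z} := [set u : Z | u \is a GRing.unit].
Definition h (t : Z) : int := \sum_(u in U) C (t * u).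

Lemma h_unit t w : w \is a GRing.unit -> h (t * w) = h t.
Proof.
move=> wU; rewrite /h [RHS](reindex_inj (mulrI wU)) /=.
apply: eq_big => [u|u _]; last by rewrite mulrA.
by rewrite !inE unitrMr.
Qed.


Lemma valZ m : val (m%:R : Z) = (m %% N)%N.
Proof. exact: (val_Zp_nat (p:=n'.+2) isT m). Qed.
Lemma unitZ m : ((m%:R : Z) \is a GRing.unit) = coprime N m.
Proof. exact: (unitZpE (p:=n'.+2) m isT). Qed.
Lemma natZ (x : Z) : (val x)%:R = x.
Proof. exact: natr_Zp. Qed.

Variables p k : nat.
Hypothesis pr : prime p.
Hypothesis Nk : N = (p ^ k)%N.

Definition H (v : nat) : {set Z} := [set z : Z | (p ^ v %| z)%N].

Lemma memH v z : (v <= k)%N -> (z \in H v) = [exists y : Z, z == (p ^ v)%:R * y].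
Proof.
move=> vk; rewrite inE; apply/idP/existsP.
  case/dvdnP=> q zq; by exists (q%:R); rewrite -natrM mulnC -zq natZ.
case=> y /eqP ->; rewrite -[y]natZ -natrM valZ /dvdn modn_dvdm ?modnMr //.
by rewrite Nk dvdn_exp2l.
Qed.

Lemma H_sub v z y : (v <= k)%N -> z \in H v -> y \in H v -> z - y \in H v.
Proof.
move=> vk; rewrite !memH // => /existsP[a /eqP ->] /existsP[b /eqP ->].
by apply/existsP; exists (a - b); rewrite mulrBr.
Qed.

Lemma H_add v z y : (v <= k)%N -> z \in H v -> y \in H v -> z + y \in H v.
Proof.
move=> vk; rewrite !memH // => /existsP[a /eqP ->] /existsP[b /eqP ->].
by apply/existsP; exists (a + b); rewrite mulrDr.
Qed.

Lemma H_mul v z y : (v <= k)%N -> z \in H v -> z * y \in H v.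
Proof.
move=> vk; rewrite !memH // => /existsP[a /eqP ->].
by apply/existsP; exists (a * y); rewrite mulrA.
Qed.

Lemma H_unit v z u : (v <= k)%N -> u \is a GRing.unit -> (z * u \in H v) = (z \in H v).
Proof.
move=> vk uU; apply/idP/idP => [zu|]; last exact: H_mul.
by rewrite -(mulrK uU z); apply: H_mul.
Qed.


Lemma pgt0 : (0 < p)%N.
Proof. exact: prime_gt0. Qed.

Lemma NG v : (v <= k)%N -> (p ^ (k - v) * p ^ v)%N = N.
Proof. by move=> vk; rewrite -expnD subnK // Nk. Qed.

Lemma sum_H v (F : Z -> int) : (v <= k)%N ->
  \sum_(z in H v) F z = \sum_(i < p ^ (k - v)) F ((i * p ^ v)%N%:R).
Proof.
move=> vk.
have pv0 : (0 < p ^ v)%N by rewrite expn_gt0 pgt0.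
have lt i : (i < p ^ (k - v))%N -> (i * p ^ v < N)%N.
  by move=> il; rewrite -(NG vk) ltn_pmul2r.
pose g (i : 'I_(p ^ (k - v))) : Z := (i * p ^ v)%N%:R.
have -> : H v = [set g i | i in [set: 'I_(p ^ (k - v))]].
  apply/setP=> z; rewrite inE; apply/idP/imsetP.
    case/dvdnP=> q zq; have qG : (q < p ^ (k - v))%N.
      by rewrite -(ltn_pmul2r pv0) -zq (NG vk) ltn_ord.
    by exists (Ordinal qG); rewrite ?inE // /g /= -zq natZ.
  case=> i _ ->; rewrite /g valZ modn_small ?lt ?ltn_ord //.
  exact: dvdn_mull.
rewrite big_imset /=; last first.
  move=> i j _ _ /(congr1 val); rewrite /g !valZ !modn_small ?lt ?ltn_ord //.
  by move/eqP; rewrite eqn_pmul2r // => /eqP/val_inj.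
by apply: eq_bigl => i; rewrite inE.
Qed.

Lemma card_H v : (v <= k)%N -> #|H v| = (p ^ (k - v))%N.
Proof.
move=> vk; have := sum_H (fun _ => 1) vk.
rewrite !sumr_const card_ord => /eqP.
rewrite -[1 *+ _]/((_)%:R) -[X in _ == X]/((_)%:R) eqr_nat => /eqP.
by []. 
Qed.


Definition T v (x : Z) : int := \sum_(z in H v) sg (x + z).
Definition Q v : int := \sum_(z in H v) C z.

Lemma sum_H_shift v z (F : Z -> int) : (v <= k)%N -> z \in H v ->
  \sum_(w in H v) F (w - z) = \sum_(w in H v) F w.
Proof.
move=> vk zH; rewrite [RHS](reindex_inj (addIr (- z))) /=.
apply: eq_bigl => w; apply/idP/idP => wH; first exact: H_sub.
by rewrite -(subrK z w); apply: H_add.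
Qed.

Lemma sq_T v : (v <= k)%N -> (#|H v|)%:R * Q v = \sum_x (T v x) ^+ 2.
Proof.
move=> vk.
have -> : \sum_x (T v x) ^+ 2 = \sum_(z in H v) \sum_(z' in H v) C (z' - z).
  rewrite /T.
  transitivity (\sum_x \sum_(z in H v) \sum_(z' in H v) sg (x + z) * sg (x + z')).
    apply: eq_bigr => x _; rewrite expr2 mulr_suml; apply: eq_bigr => z _.
    by rewrite mulr_sumr.
  rewrite exchange_big /=; apply: eq_bigr => z zH; rewrite exchange_big /=.
  apply: eq_bigr => z' _; rewrite /C -(sum_shift _ (- z)).
  by apply: eq_bigr => x _; rewrite addrNK addrAC -addrA.
rewrite (eq_bigr (fun _ => Q v)); last by move=> z zH; exact: (sum_H_shift C vk zH).
by rewrite sumr_const mulr_natl.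
Qed.


Lemma sum_h (A : {set Z}) : (forall u z, u \is a GRing.unit -> (z * u \in A) = (z \in A)) ->
  \sum_(t in A) h t = (#|U|)%:R * \sum_(z in A) C z.
Proof.
move=> hA; rewrite /h exchange_big /=.
rewrite (eq_bigr (fun _ => \sum_(z in A) C z)) ?sumr_const ?mulr_natl // => u.
rewrite inE => uU; rewrite [RHS](reindex_inj (mulIr uU)) /=.
by apply: eq_bigl => z; rewrite hA.
Qed.

Definition X L a u : int := \sum_(i < L) sg (a + i%:R * u).

Lemma sum_X2 L u : \sum_a (X L a u) ^+ 2 = \sum_(i < L) \sum_(j < L) C ((j%:R - i%:R) * u).
Proof.
rewrite /X.
transitivity (\sum_a \sum_(i < L) \sum_(j < L) sg (a + i%:R * u) * sg (a + j%:R * u)).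
  apply: eq_bigr => x _; rewrite expr2 mulr_suml; apply: eq_bigr => z _.
  by rewrite mulr_sumr.
rewrite exchange_big /=; apply: eq_bigr => i _; rewrite exchange_big /=.
apply: eq_bigr => j _; rewrite /C -(sum_shift _ (- (i%:R * u))).
by apply: eq_bigr => x _; rewrite addrNK; congr (_ * sg _); ring.
Qed.


Lemma valg (a d : Z) i : val (a + i%:R * d) = ((val a + i * val d) %% N)%N.
Proof. by rewrite -[a]natZ -[d]natZ -natrM -natrD valZ !natZ. Qed.

Lemma ap_sum (a d : Z) l : (l <= N)%N ->
  (forall i j : nat, (i < l)%N -> (j < l)%N -> i%:R * d = j%:R * d -> i = j) ->
  chi_sum chi (ap N a d l) = \sum_(i < l) sg (a + i%:R * d).
Proof.
move=> lN inj.
pose g (i : 'I_l) : Z := a + (val i)%:R * d.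
have -> : ap N a d l = [set g i | i in [set: 'I_l]].
  apply/setP=> x; rewrite inE; apply/existsP/imsetP.
    case=> i /andP[il /eqP xi]; exists (Ordinal il); first by rewrite inE.
    by apply: val_inj; rewrite /g valg; exact: xi.
  case=> i _ ->; have iN : (i < N)%N by apply: leq_trans lN.
  by exists (Ordinal iN); rewrite /g valg eqxx andbT; exact: (ltn_ord i).
rewrite /chi_sum. rewrite /chi_sum big_imset /=; last first.
  by move=> i j _ _ /addrI /(inj _ _ (ltn_ord i) (ltn_ord j)) /val_inj.
by apply: eq_big => // i; rewrite inE.
Qed.

Definition D := max_disc chi.

Lemma disc_bound (a d : Z) l (lN : (l < N.+1)%N) : (l <= N %/ gcdn N d)%N ->
  `|chi_sum chi (ap N a d l)| <= (D : int).
Proof.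
move=> ok; rewrite -abszE lez_nat /D /max_disc.
exact: (leq_bigmax_cond (F := fun t : Z * Z * 'I_N.+1 => `|chi_sum chi (ap N t.1.1 t.1.2 t.2)|%N) ((a, d), Ordinal lN)).
Qed.

Lemma X_bound L a u : u \in U -> (L <= N)%N -> `|X L a u| <= (D : int).
Proof.
rewrite inE => uU LN; rewrite /X -ap_sum //; last first.
  move=> i j iL jL /(mulIr uU) /(congr1 val); rewrite !valZ !modn_small //.
    exact: leq_trans jL LN.
  exact: leq_trans iL LN.
have lN : (L < N.+1)%N by [].
apply: (@disc_bound a u L lN).
have : coprime N u by rewrite -unitZ natZ.
by rewrite /coprime => /eqP ->; rewrite divn1.
Qed.


Lemma p_gt1 : (1 < p)%N.
Proof. exact: prime_gt1. Qed.

Lemma T_bound m x : (m < k)%N -> `|T m x| <= (D : int).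
Proof.
move=> mk; have mk' : (m <= k)%N by apply: ltnW.
have pm0 : (0 < p ^ m)%N by rewrite expn_gt0 pgt0.
have pmN : (p ^ m < N)%N by rewrite Nk ltn_exp2l // p_gt1.
have lN : (p ^ (k - m) <= N)%N by rewrite -(NG mk') leq_pmulr.
have lt i : (i < p ^ (k - m))%N -> (i * p ^ m < N)%N.
  by move=> il; rewrite -(NG mk') ltn_pmul2r.
have vd : val ((p ^ m)%N%:R : Z) = (p ^ m)%N by rewrite valZ modn_small.
rewrite /T sum_H //.
under eq_bigr do rewrite natrM.
rewrite -ap_sum //; last first.
  move=> i j il jl; rewrite -!natrM => /(congr1 val); rewrite !valZ !modn_small ?lt //.
  by move/eqP; rewrite eqn_pmul2r // => /eqP.
have lN' : (p ^ (k - m) < N.+1)%N by [].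
apply: (@disc_bound x ((p ^ m)%N%:R) _ lN').
rewrite vd; have /gcdn_idPr -> : (p ^ m %| N)%N by rewrite Nk dvdn_exp2l.
by rewrite -(NG mk') mulnK.
Qed.


Lemma unitp (a : nat) : coprime p a -> (a%:R : Z) \is a GRing.unit.
Proof. by move=> cp; rewrite unitZ Nk; apply: coprimeXl. Qed.

Lemma unit1p (y : Z) : 1 + p%:R * y \is a GRing.unit.
Proof.
rewrite -[y]natZ -natrM addrC natr1; apply: unitp.
rewrite prime_coprime // -addn1 dvdn_addr ?dvdn_mulr // dvdn1.
by rewrite neq_ltn p_gt1 orbT.
Qed.

Lemma h_shift m (t s : Z) : (m <= k)%N -> t \notin H m -> h (t + (p ^ m)%N%:R * s) = h t.
Proof.
move=> mk; rewrite inE => ndv.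
have t0 : (0 < t)%N.
  by rewrite lt0n; apply: contraNneq ndv => ->; rewrite dvdn0.
case: (pfactor_coprime pr t0) => a cpa ta.
set v := logn p t in ta.
have vm : (v < m)%N.
  rewrite ltnNge; apply: contraNN ndv => mv.
  by rewrite ta; apply: dvdn_mull; rewrite dvdn_exp2l.
have aU := unitp cpa.
pose w := 1 + p%:R * ((p ^ (m - v).-1)%N%:R * s * (a%:R)^-1).
have wU : w \is a GRing.unit by apply: unit1p.
suff -> : t + (p ^ m)%N%:R * s = t * w by rewrite h_unit.
have ptE : t = a%:R * (p ^ v)%N%:R by rewrite -natrM -ta natZ.
have pmE : (p ^ m)%N = (p ^ v * (p * p ^ (m - v).-1))%N.
  by rewrite -expnS prednK ?subn_gt0 // -expnD subnKC // ltnW.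
rewrite /w pmE !natrM ptE mulrDr mulr1; congr (_ + _).
move: (mulrV aU); set ai := (a%:R)^-1; move: ai => ai e.
by rewrite -[LHS]mul1r -[X in X * _]e; ring.
Qed.


Lemma unit_small (x : nat) : (0 < x < p)%N -> (x%:R : Z) \is a GRing.unit.
Proof.
case/andP=> x0 xp; apply: unitp; rewrite prime_coprime //.
by apply/negP => /(dvdn_leq x0); rewrite leqNgt xp.
Qed.

Lemma h_diff m (s s' : nat) : (s < p)%N -> (s' < p)%N -> s != s' ->
  h ((p ^ m)%N%:R * (s'%:R - s%:R)) = h ((p ^ m)%N%:R).
Proof.
move=> sp s'p ne; case: (ltngtP s s') => [lt|lt|eq]; last by move: ne; rewrite eq eqxx.
  rewrite -natrB; last exact: ltnW.
  rewrite h_unit; first by [].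
  apply: unit_small.
  by rewrite subn_gt0 lt /=; apply: leq_ltn_trans s'p; apply: leq_subr.
rewrite -opprB -natrB; last exact: ltnW.
rewrite h_unit; first by [].
rewrite unitrN; apply: unit_small.
by rewrite subn_gt0 lt /=; apply: leq_ltn_trans sp; apply: leq_subr.
Qed.

Lemma h_level m t : (m.+1 <= k)%N -> t \in H m -> t \notin H m.+1 -> h t = h ((p ^ m)%N%:R).
Proof.
move=> mk; rewrite !inE => /dvdnP[q tq] nd.
have cq : coprime p q.
  rewrite prime_coprime //; apply: contraNN nd => /dvdnP[r qr].
  by rewrite tq qr -mulnA -expnS dvdn_mull.
have -> : t = (q * p ^ m)%N%:R by apply: val_inj; rewrite valZ -tq modn_small.
rewrite natrM mulrC h_unit; first by [].
exact: unitp.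
Qed.


Lemma natH m x : (x < N)%N -> ((x%:R : Z) \in H m) = (p ^ m %| x)%N.
Proof. by move=> xN; rewrite inE valZ modn_small. Qed.

Lemma H0 m : (0 : Z) \in H m.
Proof. by rewrite inE dvdn0. Qed.

Lemma negH m z : (m <= k)%N -> (- z \in H m) = (z \in H m).
Proof.
move=> mk; apply/idP/idP => zH.
  by rewrite -[z]opprK -sub0r; apply: H_sub => //; apply: H0.
by rewrite -sub0r; apply: H_sub => //; apply: H0.
Qed.

Lemma MH m y : (m <= k)%N -> (p ^ m)%N%:R * y \in H m.
Proof. by move=> mk; rewrite memH //; apply/existsP; exists y. Qed.

Lemma addMH m x y : (m <= k)%N -> (x + (p ^ m)%N%:R * y \in H m) = (x \in H m).
Proof.
move=> mk; apply/idP/idP => xH; last by apply: H_add => //; apply: MH.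
by rewrite -(addrK ((p ^ m)%N%:R * y) x); apply: H_sub => //; apply: MH.
Qed.

Lemma diffH m (r r' : nat) : (m <= k)%N -> (r < p ^ m)%N -> (r' < p ^ m)%N ->
  ((r'%:R - r%:R : Z) \in H m) = (r' == r).
Proof.
move=> mk rM r'M.
have MN : (p ^ m <= N)%N by rewrite Nk leq_exp2l // p_gt1.
have small x : (0 < x)%N -> (x < p ^ m)%N -> ~~ (p ^ m %| x)%N.
  by move=> x0 xM; apply/negP => /(dvdn_leq x0); rewrite leqNgt xM.
case: (ltngtP r r') => [lt|lt|->]; last by rewrite subrr; apply: H0.
  have d0 : (0 < r' - r)%N by rewrite subn_gt0.
  have dM : (r' - r < p ^ m)%N by apply: leq_ltn_trans (leq_subr _ _) r'M.
  rewrite -natrB; last exact: ltnW.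
  rewrite natH; last exact: leq_trans dM MN.
  rewrite (negbTE (small _ d0 dM)).
  by [].
have d0 : (0 < r - r')%N by rewrite subn_gt0.
have dM : (r - r' < p ^ m)%N by apply: leq_ltn_trans (leq_subr _ _) rM.
rewrite -opprB -natrB; last exact: ltnW.
rewrite negH; last exact: mk.
rewrite natH; last exact: leq_trans dM MN.
rewrite (negbTE (small _ d0 dM)).
by [].
Qed.


Definition Pr m r : int := \sum_(r' < p ^ m | r' != r :> nat) h (r'%:R - r%:R).
Definition E m : int := \sum_(t | t \notin H m) h t.

Lemma sumZ (F : Z -> int) : \sum_x F x = \sum_(i < N) F (i%:R).
Proof. by apply: eq_bigr => x _; rewrite natZ. Qed.

Lemma stepP m r : (m <= k)%N -> (r < p ^ m)%N -> E m = (p ^ (k - m))%N%:R * Pr m r.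
Proof.
move=> mk rM; rewrite /E (reindex_inj (addIr (- r%:R))) /= big_mkcond /=.
rewrite (sumZ (fun x => if x + - r%:R \notin H m then h (x + - r%:R) else 0)) /=.
rewrite (sum_block' (fun i => if i%:R + - r%:R \notin H m then h (i%:R + - r%:R) else 0) (esym (NG mk))).
transitivity (\sum_(s < p ^ (k - m)) Pr m r); last by rewrite sumr_const card_ord mulr_natl.
apply: eq_bigr => s _; rewrite /Pr [RHS]big_mkcond /=; apply: eq_bigr => r' _.
have -> : ((r' + p ^ m * s)%N%:R + - r%:R : Z) = (r'%:R - r%:R) + (p ^ m)%N%:R * s%:R.
  by rewrite natrD natrM; ring.
have r'M : (r' < p ^ m)%N by [].
rewrite addMH // diffH //.
case: eqP => //= ne.
rewrite h_shift //.
by rewrite diffH //; apply/eqP.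
Qed.

Lemma sumP m : (m <= k)%N ->
  (p ^ (k - m))%N%:R * \sum_(r < p ^ m) Pr m r = (p ^ m)%N%:R * E m.
Proof.
move=> mk; rewrite mulr_sumr (eq_bigr (fun _ => E m)).
  by rewrite sumr_const card_ord mulr_natl.
by move=> r _; rewrite (stepP mk (ltn_ord r)).
Qed.


Definition Q0 : int := \sum_z C z.

Lemma sum_hT : \sum_t h t = (#|U|)%:R * Q0.
Proof.
have hA : forall u z, u \is a GRing.unit -> (z * u \in [set: Z]) = (z \in [set: Z]).
  by move=> *; rewrite !inE.
have := sum_h hA; rewrite /Q0 => e.
rewrite -[LHS](eq_bigl _ _ (fun x => in_setT x)) e.
by rewrite (eq_bigl _ _ (fun x => in_setT x)).
Qed.

Lemma E_eq m : (m <= k)%N -> E m = (#|U|)%:R * (Q0 - Q m).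
Proof.
move=> mk; have := sum_hT; rewrite (bigID (fun t => t \in H m)) /= => e.
rewrite /E mulrBr -e /Q sum_h; first by rewrite addrC addrK.
by move=> u z uU; apply: H_unit.
Qed.

Lemma Hsub m t : t \in H m.+1 -> t \in H m.
Proof. by rewrite !inE; apply: dvdn_trans; rewrite dvdn_exp2l. Qed.

Lemma hM_eq m : (m.+1 <= k)%N ->
  ((#|H m|)%:R - (#|H m.+1|)%:R) * h ((p ^ m)%N%:R) = (#|U|)%:R * (Q m - Q m.+1).
Proof.
move=> mk; have mk' : (m <= k)%N by apply: ltnW.
have split (F : Z -> int) : \sum_(t in H m) F t =
    \sum_(t in H m.+1) F t + \sum_(t in H m | t \notin H m.+1) F t.
  rewrite (bigID (fun t => t \in H m.+1)) /=; congr (_ + _).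
  apply: eq_bigl => t; apply/andP/idP => [[]//|tH]; split => //; exact: Hsub.
have c1 : (#|H m|)%:R - (#|H m.+1|)%:R = \sum_(t in H m | t \notin H m.+1) (1 : int).
  have e := split (fun _ => 1).
  rewrite [X in X = _]sumr_const [X in _ = X + _]sumr_const in e.
  by rewrite e addrAC subrr add0r.
rewrite c1 mulr_suml /Q mulrBr -!sum_h; try by move=> u z uU; apply: H_unit.
rewrite split addrAC subrr add0r; apply: eq_bigr => t /andP[t1 t2].
by rewrite mul1r (h_level mk t1 t2).
Qed.


Lemma h0 : h 0 = (#|U|)%:R * N%:R.
Proof.
rewrite /h (eq_bigr (fun _ => C 0)); last by move=> u _; rewrite mul0r.
rewrite sumr_const mulr_natl; congr (_ *+ _).
rewrite /C (eq_bigr (fun _ => 1)); last by move=> x _; rewrite addr0 sg2.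
by rewrite sumr_const card_ord.
Qed.

Lemma inner_s m c (s : nat) : (c <= p)%N -> (s < c)%N ->
  \sum_(s' < c) h ((p ^ m)%N%:R * (s'%:R - s%:R)) = h 0 + (c.-1)%:R * h ((p ^ m)%N%:R).
Proof.
move=> cp sc; rewrite (bigD1 (Ordinal sc)) //= subrr mulr0; congr (_ + _).
rewrite (eq_bigr (fun _ => h ((p ^ m)%N%:R))); last first.
  move=> s' ne; apply: h_diff.
  - exact: leq_trans sc cp.
  - exact: leq_trans (ltn_ord s') cp.
  by rewrite eq_sym; apply: contra ne => /eqP e; apply/eqP/val_inj.
rewrite sumr_const mulr_natl; congr (_ *+ _).
rewrite cardC1 card_ord //.
Qed.

Lemma inner_r m (r s s' : nat) : (m <= k)%N -> (r < p ^ m)%N ->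
  \sum_(r' < p ^ m) h ((r' + p ^ m * s')%N%:R - (r + p ^ m * s)%N%:R)
    = h ((p ^ m)%N%:R * (s'%:R - s%:R)) + Pr m r.
Proof.
move=> mk rM.
have eq r' : ((r' + p ^ m * s')%N%:R - (r + p ^ m * s)%N%:R : Z)
             = (r'%:R - r%:R) + (p ^ m)%N%:R * (s'%:R - s%:R).
  by rewrite !natrD !natrM; ring.
rewrite (bigD1 (Ordinal rM)) //= eq subrr add0r; congr (_ + _).
rewrite /Pr; apply: eq_big => [r'|r' ne].
  by [].
by rewrite eq h_shift // diffH.
Qed.

Lemma block m c : (m <= k)%N -> (c <= p)%N ->
  \sum_(i < c * p ^ m) \sum_(j < c * p ^ m) h (j%:R - i%:R)
  = (c * c)%:R * \sum_(r < p ^ m) Pr m r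
    + (c * p ^ m)%:R * (h 0 + (c.-1)%:R * h ((p ^ m)%N%:R)).
Proof.
move=> mk cp.
rewrite (sum_block (fun i => \sum_(j < c * p ^ m) h (j%:R - i%:R))).
transitivity (\sum_(s < c) \sum_(r < p ^ m)
   (h 0 + (c.-1)%:R * h ((p ^ m)%N%:R) + c%:R * Pr m r)).
  apply: eq_bigr => s _; apply: eq_bigr => r _.
  rewrite (sum_block (fun j => h (j%:R - (r + p ^ m * s)%N%:R))).
  under eq_bigr => s' _ do rewrite inner_r //.
  rewrite big_split /= inner_s //.
  by rewrite sumr_const card_ord [c%:R * _]mulr_natl.
rewrite (eq_bigr (fun _ => (p ^ m)%N%:R * (h 0 + (c.-1)%:R * h ((p ^ m)%N%:R))
                         + c%:R * \sum_(r < p ^ m) Pr m r)); last first.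
  by move=> s _; rewrite big_split /= sumr_const card_ord -mulr_sumr [(p ^ m)%N%:R * _]mulr_natl.
rewrite sumr_const card_ord -[_ *+ c]mulr_natl !natrM; ring.
Qed.


Lemma S_eq L : \sum_a \sum_(u in U) (X L a u) ^+ 2 = \sum_(i < L) \sum_(j < L) h (j%:R - i%:R).
Proof.
rewrite exchange_big /=.
under eq_bigr => u _ do rewrite sum_X2.
rewrite exchange_big /=; apply: eq_bigr => i _.
by rewrite exchange_big.
Qed.

Lemma sqr_le (x d : int) : `|x| <= d -> x ^+ 2 <= d ^+ 2.
Proof. rewrite ler_norml => /andP[h1 h2]; rewrite !expr2; nia. Qed.

Lemma S_le L : (L <= N)%N ->
  \sum_a \sum_(u in U) (X L a u) ^+ 2 <= N%:R * ((#|U|)%:R * (D%:Z) ^+ 2).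
Proof.
move=> LN; apply: (@le_trans _ _ (\sum_(a : Z) \sum_(u in U) (D%:Z) ^+ 2)).
  apply: ler_sum => a _; apply: ler_sum => u uU; apply: sqr_le; exact: X_bound.
rewrite (eq_bigr (fun _ => (#|U|)%:R * (D%:Z) ^+ 2)); last first.
  by move=> a _; rewrite sumr_const mulr_natl.
rewrite sumr_const [X in _ *+ X](_ : _ = N); last exact: card_ord.
by rewrite -[_ *+ N]mulr_natl.
Qed.


Lemma Q0_ge0 : 0 <= Q0.
Proof.
have -> : Q0 = (\sum_x sg x) ^+ 2.
  rewrite /Q0 /C exchange_big /= expr2 mulr_suml; apply: eq_bigr => x _.
  rewrite -mulr_sumr; congr (_ * _).
  by rewrite -(sum_shift sg x); apply: eq_bigr => z _; rewrite addrC.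
exact: sqr_ge0.
Qed.

Lemma sumT_le v d : (v <= k)%N -> (forall x, `|T v x| <= d) ->
  (#|H v|)%:R * Q v <= N%:R * d ^+ 2.
Proof.
move=> vk hT; rewrite sq_T //.
apply: (@le_trans _ _ (\sum_(x : Z) d ^+ 2)).
  by apply: ler_sum => x _; apply: sqr_le.
rewrite sumr_const [X in _ *+ X](_ : _ = N); last exact: card_ord.
by rewrite -[_ *+ N]mulr_natl.
Qed.

Lemma Qm_bound m : (m < k)%N -> Q m * (p ^ (k - m))%N%:R <= N%:R * (D%:Z) ^+ 2.
Proof.
move=> mk; rewrite mulrC -(card_H (ltnW mk)); apply: sumT_le; first exact: ltnW.
by move=> x; apply: T_bound.
Qed.

Lemma Qv_triv v : (v <= k)%N -> Q v * (p ^ (k - v))%N%:R <= N%:R * ((p ^ (k - v))%N%:R) ^+ 2.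
Proof.
move=> vk; rewrite mulrC -(card_H vk); apply: sumT_le => // x.
rewrite /T; apply: (le_trans (ler_norm_sum _ _ _)).
rewrite (eq_bigr (fun _ => 1)); last by move=> z _; rewrite /sg; case: (chi _); rewrite ?normrN normr1.
by rewrite sumr_const.
Qed.


Lemma main_int m c : (m.+1 <= k)%N -> (0 < c)%N -> (c < p)%N ->
  (p ^ m * p <= (p ^ (k - m)) ^ 2)%N ->
  (p * p ^ m * (c * (p - c)) <= D ^ 2 * (p * (p - 1) + c * (p - c)))%N.
Proof.
move=> mk c0 cp hmp.
have mk' : (m <= k)%N by apply: ltnW.
have km : (k - m = (k - m.+1).+1)%N by rewrite subnSK.
have pkm : (p ^ (k - m) = p * p ^ (k - m.+1))%N by rewrite km expnS.
have NE : N = (p ^ m * p * p ^ (k - m.+1))%N by rewrite -mulnA -pkm -expnD subnKC // Nk.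
have NR : (N%:R : int) = (p ^ m)%N%:R * p%:R * (p ^ (k - m.+1))%N%:R by rewrite {1}NE !natrM.
have pkmR : ((p ^ (k - m))%N%:R : int) = p%:R * (p ^ (k - m.+1))%N%:R by rewrite pkm natrM.
have cpm : (c * p ^ m <= N)%N.
  rewrite NE; apply: (@leq_trans (p ^ m * p)).
    by rewrite mulnC leq_mul2l ltnW ?orbT.
  by rewrite leq_pmulr // expn_gt0 pgt0.
have U0 : (0 < #|U|)%N by apply/card_gt0P; exists 1; rewrite inE unitr1.
rewrite -(@ler_nat int) !natrM natrD !natrM !natrB ?(ltnW cp) ?prime_gt0 //.

have W0 : 0 < (#|U|)%:R :> int by rewrite ltr0n.
have M0 : 0 < (p ^ m)%N%:R :> int by rewrite ltr0n expn_gt0 pgt0.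
have G0 : 0 < (p ^ (k - m.+1))%N%:R :> int by rewrite ltr0n expn_gt0 pgt0.
have P0 : 0 < p%:R :> int by rewrite ltr0n pgt0.
have c0' : 0 < c%:R :> int by rewrite ltr0n.
have cP' : c%:R < p%:R :> int by rewrite ltr_nat.
have hMP' : (p ^ m)%N%:R * p%:R <= (p%:R * (p ^ (k - m.+1))%N%:R) ^+ 2 :> int.
  by rewrite -pkmR -natrM -natrX ler_nat.
have e1 : \sum_a \sum_(u in U) (X (c * p ^ m) a u) ^+ 2
    = (c%:R * c%:R) * \sum_(r < p ^ m) Pr m r
      + (c%:R * (p ^ m)%N%:R) * (h 0 + (c%:R - 1) * h ((p ^ m)%N%:R)).
  by rewrite S_eq block ?(ltnW cp) // !natrM -subn1 natrB.
have e2 : (p%:R * (p ^ (k - m.+1))%N%:R) * \sum_(r < p ^ m) Pr m r = (p ^ m)%N%:R * E m.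
  by rewrite -pkmR sumP.
have e3 := E_eq mk'.
have e4 : (p%:R * (p ^ (k - m.+1))%N%:R - (p ^ (k - m.+1))%N%:R) * h ((p ^ m)%N%:R)
    = (#|U|)%:R * (Q m - Q m.+1).
  by rewrite -hM_eq // (card_H mk') (card_H mk) pkmR.
have i0 := S_le cpm; rewrite NR in i0.
have e6 := h0; rewrite NR in e6.
have q1 := Q0_ge0.
have q2 := Qm_bound mk; rewrite pkmR NR in q2.
have q3 := Qv_triv mk; rewrite NR in q3.
have := alg W0 M0 G0 P0 c0' cP' hMP' e1 e2 e3 e4 i0 e6 q1 q2 q3.
by apply: eqle; rewrite -?natz; ring.
Qed.


End Core.

Local Close Scope ring_scope.

Lemma six_bound n' (chi : {ffun 'I_n'.+2 -> bool}) p k : prime p -> (0 < k)%N ->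
  n'.+2 = (p ^ k)%N -> (p ^ (k - k %/ 3) <= 6 * (max_disc chi) ^ 2)%N.
Proof.
move=> pr k0 Nk.
set m := ((2 * k - 1) %/ 3)%N.
set c := p./2.
have p1 : (1 < p)%N by apply: prime_gt1.
have hp : (p = odd p + c * 2)%N by rewrite muln2 odd_double_half.
have ob : (odd p <= 1)%N by case: (odd p).
move: (odd p) ob hp => b ob hp.
have c0 : (0 < c)%N by lia.
have cp : (c < p)%N by lia.
have mk : (m.+1 <= k)%N by rewrite /m; lia.
have hmp : (p ^ m * p <= (p ^ (k - m)) ^ 2)%N.
  by rewrite -expnSr -expnM leq_exp2l //; rewrite /m; lia.
have := main_int chi pr Nk mk c0 cp hmp.
rewrite /D.
have -> : (k - k %/ 3 = m.+1)%N by rewrite /m; lia.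
rewrite [p ^ m.+1]expnSr.
set d := max_disc chi.
move=> hi.
have K0 : (0 < c * (p - c))%N by rewrite muln_gt0 c0 subn_gt0 cp.
have hb : (p * (p - 1) + c * (p - c) <= 6 * (c * (p - c)))%N.
  clear -hp ob c0; move: ob; rewrite leq_eqVlt ltnS leqn0 => /orP[] /eqP e; rewrite e in hp;
    rewrite hp; clear hp.
    have -> : (1 + c * 2 - c = c.+1)%N by lia.
    have -> : (1 + c * 2 - 1 = c * 2)%N by lia.
    nia.
  have -> : (0 + c * 2 - c = c)%N by lia.
  have -> : (0 + c * 2 - 1 = (c * 2).-1)%N by lia.
  nia.
set K := (c * (p - c))%N in K0 hb hi *.
set B := (p * (p - 1) + K)%N in hb hi *.
have : (p * p ^ m * K <= 6 * d ^ 2 * K)%N.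
  apply: (leq_trans hi); rewrite -mulnA [(6 * _)%N]mulnC -mulnA leq_mul2l.
  by rewrite mulnC hb orbT.
by rewrite leq_pmul2r // mulnC.
Qed.

Lemma disc_six p k : prime p -> (0 < k)%N ->
  (p ^ (k - k %/ 3) <= 6 * (disc_AP (p ^ k)) ^ 2)%N.
Proof.
move=> pr k0.
have p1 : (1 < p)%N by apply: prime_gt1.
have pk1 : (1 < p ^ k)%N by rewrite -[1%N](expn0 p) ltn_exp2l.
have ek : (p ^ (k - k %/ 3) <= p ^ k)%N by rewrite leq_exp2l // leq_subr.
case E: (p ^ k) pk1 ek => [|[|n']] // _ ek.
rewrite /disc_AP; apply: (big_ind (fun x => p ^ (k - k %/ 3) <= 6 * x ^ 2)%N).
- apply: (leq_trans ek); rewrite expnS expn1; nia.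
- by move=> x y hx hy; case: (leqP x y).
by move=> chi _; apply: six_bound.
Qed.


Lemma INR_expn p e : INR (p ^ e) = pow (INR p) e.
Proof.
elim: e => [|e IH]; first by rewrite expn0.
by rewrite expnS mulnE mult_INR IH.
Qed.

Theorem corollary4p9 (p k : nat) :
  prime p -> 0 < k ->
  Rle (Rmult (Rinv (INR 4)) (Rpower (INR p) (Rdiv (INR (k - k %/ 3)) (INR 2))))
      (INR (disc_AP (p ^ k))).
Proof.
move=> pr k0.
have h6 := disc_six pr k0.
move: h6; set e := (k - k %/ 3)%N; set d := disc_AP (p ^ k) => h6.
have p0 : Rlt 0 (INR p) by apply: lt_0_INR; apply/ssrnat.ltP; exact: prime_gt0.
set y := Rpower (INR p) (Rdiv (INR e) (INR 2)).
have y0 : Rlt 0 y by apply: exp_pos.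
have yy : Rmult y y = pow (INR p) e.
  rewrite /y -Rpower_plus.
  replace (Rplus (Rdiv (INR e) (INR 2)) (Rdiv (INR e) (INR 2))) with (INR e).
    by rewrite Rpower_pow.
  replace (INR 2) with (IZR 2) by (simpl; lra); lra.
have h6R : Rle (pow (INR p) e) (Rmult (IZR 6) (Rmult (INR d) (INR d))).
  rewrite -INR_expn.
  have -> : Rmult (IZR 6) (Rmult (INR d) (INR d)) = INR (6 * d ^ 2).
    rewrite mulnE mult_INR expnS expn1 mulnE mult_INR.
    by congr Rmult; simpl; lra.
  by apply: le_INR; apply/ssrnat.leP.
have d0 : Rle 0 (INR d) by apply: pos_INR.
replace (INR 4) with (IZR 4) by (simpl; lra).
nra.
Qed.
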